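(* Let $n\ge 4$ and let $\mathcal{W}(n)=(Q,\Sigma,\delta,0,\{n-2\})$ with $Q=\{0,\dots,n-1\}$, where $\Sigma$ consists of the following letters: (1) $b_i$ for $1\le i\le n-3$, inducing the transformation $(0\to n-1)(i\to n-2)(n-2\to n-1)$; (2) one letter $c_i$ for every transformation of $Q$ that maps $0$ to $n-2$, maps $\{n-2,n-1\}$ to $n-1$ and maps $Q_M$ into $Q\setminus\{0,n-2\}$, other than the transformation $(0\to n-2)(Q_M\to n-1)(n-2\to n-1)$; (3) one letter $d_i$ for every transformation of $Q$ that maps $0$ to a state of $Q_M$, maps $Q_M$ into $\{n-2,n-1\}$ and maps $\{n-2,n-1\}$ to $n-1$, other than the transformations $(0\to q)(Q_M\to n-1)(n-2\to n-1)$ with $q\in Q_M$. Then the transition semigroup of $\mathcal{W}(n)$ is $\mathbf{W}^{\ge 6}_{\mathrm{bf}}(n)$.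
   Context: $Q_M=\{1,\dots,n-3\}$. Transformations act on the right, $q(st)=(qs)t$; the transition semigroup of a DFA is the semigroup of transformations of its state set induced by nonempty words. For $S\subseteq Q$ and $q\in Q$, $(S\to q)$ denotes the transformation mapping every state of $S$ to $q$ and fixing all other states; $(p\to q)$ means $(\{p\}\to q)$; juxtaposition denotes composition. Let $\mathbf{B}_{\mathrm{bf}}(n)$ be the set of all transformations $t$ of $Q$ with $0\notin Qt$, $(n-1)t=n-1$, $(n-2)t=n-1$, and for all $j\ge1$, either $0t^j=n-1$ or $0t^j\ne qt^j$ for all $0<q<n-1$. Then $\mathbf{W}^{\ge 6}_{\mathrm{bf}}(n)=\{t\in\mathbf{B}_{\mathrm{bf}}(n)\mid 0t\in\{n-2,n-1\}$, or $0t\in Q_M$ and $qt\in\{n-2,n-1\}$ for all $q\in Q_M\}$. *)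

(* Defs.v *)
From mathcomp Require Import all_boot.
Set Implicit Arguments. Unset Strict Implicit. Unset Printing Implicit Defensive.

Definition inQM (n : nat) (k : nat) : bool := (1 <= k) && (k <= n - 3).

(* Transformations act on the right: q(st) = (qs)t, so a word a1...ak acts by
   applying a1 first, then a2, ..., then ak. *)
Definition word_trans (T : finType) (S : Type) (delta : S -> T -> T) (w : seq S)
  : {ffun T -> T} := [ffun q => foldl (fun p a => delta a p) q w].

Definition transition_semigroup (T : finType) (S : Type) (delta : S -> T -> T)
  (t : {ffun T -> T}) : Prop :=
  exists w : seq S, w <> [::] /\ word_trans delta w = t.

Record DFA (n : nat) := MkDFA {
  alphabet : finType;
  delta : alphabet -> 'I_n -> 'I_n;
  init : nat;
  final : pred nat
}.

Definition dfa_transition_semigroup n (A : DFA n) : {ffun 'I_n -> 'I_n} -> Prop :=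
  transition_semigroup (@delta n A).

Definition is_b (n : nat) (t : {ffun 'I_n -> 'I_n}) : bool :=
  [exists i : 'I_n, inQM n (val i) &&
    [forall q : 'I_n, val (t q) ==
      (if val q == 0 then n - 1
       else if val q == val i then n - 2
       else if val q == n - 2 then n - 1
       else val q)]].

Definition is_c (n : nat) (t : {ffun 'I_n -> 'I_n}) : bool :=
  [forall q : 'I_n, (val q == 0) ==> (val (t q) == n - 2)] &&
  [forall q : 'I_n, ((val q == n - 2) || (val q == n - 1)) ==> (val (t q) == n - 1)] &&
  [forall q : 'I_n, inQM n (val q) ==> ((val (t q) != 0) && (val (t q) != n - 2))] &&
  ~~ [forall q : 'I_n, val (t q) ==
      (if val q == 0 then n - 2
       else if inQM n (val q) then n - 1
       else if val q == n - 2 then n - 1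
       else val q)].

Definition is_d (n : nat) (t : {ffun 'I_n -> 'I_n}) : bool :=
  [forall q : 'I_n, (val q == 0) ==> inQM n (val (t q))] &&
  [forall q : 'I_n, inQM n (val q) ==> ((val (t q) == n - 2) || (val (t q) == n - 1))] &&
  [forall q : 'I_n, ((val q == n - 2) || (val q == n - 1)) ==> (val (t q) == n - 1)] &&
  ~~ [exists p : 'I_n, inQM n (val p) &&
      [forall q : 'I_n, val (t q) ==
        (if val q == 0 then val p
         else if inQM n (val q) then n - 1
         else if val q == n - 2 then n - 1
         else val q)]].

Definition W_letter (n : nat) (t : {ffun 'I_n -> 'I_n}) : bool :=
  [|| is_b t, is_c t | is_d t].

(* Alphabet of W(n): one letter per transformation listed above (the three
   families induce pairwise distinct transformations). *)
Definition W_alphabet (n : nat) : finType :=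
  {t : {ffun 'I_n -> 'I_n} | W_letter t}.

Definition W_delta (n : nat) (a : W_alphabet n) (q : 'I_n) : 'I_n := (val a) q.

Definition W_dfa (n : nat) : DFA n :=
  @MkDFA n (W_alphabet n) (@W_delta n) 0 (pred1 (n - 2)).

Definition B_bf (n : nat) (t : {ffun 'I_n -> 'I_n}) : Prop :=
  (forall q : 'I_n, val (t q) <> 0) /\
  (forall q : 'I_n, val q = n - 1 -> val (t q) = n - 1) /\
  (forall q : 'I_n, val q = n - 2 -> val (t q) = n - 1) /\
  (forall j : nat, 1 <= j -> forall z : 'I_n, val z = 0 ->
     val (iter j t z) = n - 1 \/
     (forall q : 'I_n, 0 < val q < n - 1 -> iter j t z <> iter j t q)).

Definition W_bf6 (n : nat) (t : {ffun 'I_n -> 'I_n}) : Prop :=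
  B_bf t /\
  forall z : 'I_n, val z = 0 ->
    (val (t z) = n - 2 \/ val (t z) = n - 1) \/
    (inQM n (val (t z)) /\
     forall q : 'I_n, inQM n (val q) -> val (t q) = n - 2 \/ val (t q) = n - 1).

(* Main.v *)
Require Import Defs.
From mathcomp Require Import all_boot zify.
Set Implicit Arguments. Unset Strict Implicit. Unset Printing Implicit Defensive.

Ltac nv := repeat match goal with | H : context [@isSub.val_subdef _ _ _ _ ?x] |- _ => change (@isSub.val_subdef _ _ _ _ x) with (nat_of_ord x) in H | |- context [@isSub.val_subdef _ _ _ _ ?x] => change (@isSub.val_subdef _ _ _ _ x) with (nat_of_ord x) end.
Ltac l := unfold inQM in *; nv; lia.

Ltac ifs := repeat match goal with
  | |- context [if ?b then _ else _] => let E := fresh "E" in destruct b eqn:E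
  | H : context [if ?b then _ else _] |- _ => let E := fresh "E" in destruct b eqn:E
  end.

Definition P (n : nat) (t : {ffun 'I_n -> 'I_n}) : Prop :=
  (forall q : 'I_n, val (t q) <> 0) /\
  (forall q : 'I_n, val q = n-2 \/ val q = n-1 -> val (t q) = n-1) /\
  (forall z : 'I_n, val z = 0 ->
     val (t z) = n-1 \/
     (val (t z) = n-2 /\ forall q : 'I_n, inQM n (val q) -> val (t q) <> n-2) \/
     (inQM n (val (t z)) /\ forall q : 'I_n, inQM n (val q) -> val (t q) = n-2 \/ val (t q) = n-1)).

Lemma sinkj n (t : {ffun 'I_n -> 'I_n})
  (h2 : forall q : 'I_n, val q = n-2 \/ val q = n-1 -> val (t q) = n-1) j (x : 'I_n) :
  val x = n-2 \/ val x = n-1 -> val (iter j.+1 t x) = n-1.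
Proof.
move=> hx; elim: j => [|j IH] /=; first exact: h2.
apply: h2; right; exact: IH.
Qed.

Lemma P_W n (hn : 4 <= n) (t : {ffun 'I_n -> 'I_n}) : P t <-> W_bf6 t.
Proof.
split.
- move=> [h1 [h2 h3]]; split; last first.
    move=> z z0; case: (h3 z z0) => [h|[[h _]|[h hh]]]; [by left; right|by left; left|by right].
  split; first exact: h1.
  split; first by move=> q hq; apply: h2; right.
  split; first by move=> q hq; apply: h2; left.
  move=> [//|[|[|j]]] _ z z0.
  + rewrite /=. case: (h3 z z0) => [h|[[h hQ]|[h hQ]]]; first by left.
    * right=> q hq /(congr1 val) e.
      have [hq'|hq'] : inQM n (val q) \/ val q = n-2 by l.
      - by apply: (hQ q hq'); rewrite -e.
      - have := h2 q (or_introl hq'); l.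
    * right=> q hq /(congr1 val) e.
      have [hq'|hq'] : inQM n (val q) \/ val q = n-2 by l.
      - have := hQ q hq'; move: h; l.
      - have := h2 q (or_introl hq'); move: h; l.
  + rewrite /=. case: (h3 z z0) => [h|[[h hQ]|[h hQ]]].
    * left; apply: h2; by right.
    * left; apply: h2; by left.
    * have [e|e] := hQ _ h; last by left.
      right=> q hq /(congr1 val); rewrite e => e'.
      have [hq'|hq'] : inQM n (val q) \/ val q = n-2 by l.
      - have := h2 (t q) (hQ q hq'); l.
      - have := h2 (t q) (or_intror (h2 q (or_introl hq'))); l.
  + left. rewrite iterSr iterSr. apply: sinkj => //.
    case: (h3 z z0) => [h|[[h hQ]|[h hQ]]].
    * right; apply: h2; by right.
    * right; apply: h2; by left.
    * exact: hQ.
- move=> [[h1 [h2 [h3 h4]]] h5]; split; first exact: h1.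
  split; first by move=> q [] hq; [apply: h3|apply: h2].
  move=> z z0; case: (h5 z z0) => [[h|h]|[h hQ]].
  + right; left; split => // q hq e.
    case: (h4 1 isT z z0) => /= [|hh]; first l.
    apply: (hh q); first by move: hq; l.
    by apply: val_inj; rewrite /= e h.
  + by left.
  + by right; right.
Qed.

Ltac inst q := repeat match goal with
  | H : forall x : 'I_ _, _ |- _ => let h := fresh "h" in move: (H q) => h; move: H
  end; intros.

Lemma letter_P n (hn : 4 <= n) (t : {ffun 'I_n -> 'I_n}) : W_letter t -> P t.
Proof.
case/or3P.
- case/existsP => i /andP [hi /forallP H].
  have Hq q := eqP (H q).
  split; [|split].
  + move=> q; have := Hq q; have := ltn_ord q; ifs; l.
  + move=> q hq; have := Hq q; have := ltn_ord q; ifs; l.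
  + move=> z z0; left; have := Hq z; have := ltn_ord z; ifs; l.
- move/andP=> [/andP [/andP [/forallP H0 /forallP H1] /forallP H2] _].
  split; [|split].
  + move=> q; have := H0 q; have := H1 q; have := H2 q; have := ltn_ord q;
    have := ltn_ord (t q); rewrite /implb; ifs; l.
  + move=> q hq; have := H0 q; have := H1 q; have := H2 q; have := ltn_ord q;
    have := ltn_ord (t q); rewrite /implb; ifs; l.
  + move=> z z0; right; left; split.
    * have := H0 z; rewrite /implb; ifs; l.
    * move=> q hq; have := H2 q; rewrite /implb; ifs; l.
- move/andP=> [/andP [/andP [/forallP H0 /forallP H1] /forallP H2] _].
  split; [|split].
  + move=> q; have := H0 q; have := H1 q; have := H2 q; have := ltn_ord q;
    have := ltn_ord (t q); rewrite /implb; ifs; l.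
  + move=> q hq; have := H0 q; have := H1 q; have := H2 q; have := ltn_ord q;
    have := ltn_ord (t q); rewrite /implb; ifs; l.
  + move=> z z0; right; right; split.
    * have := H0 z; rewrite /implb; ifs; l.
    * move=> q hq; have := H1 q; rewrite /implb; ifs; l.
Qed.

Lemma P_comp n (hn : 4 <= n) (s t : {ffun 'I_n -> 'I_n}) :
  P s -> P t -> P [ffun q => t (s q)].
Proof.
move=> [s1 [s2 s3]] [t1 [t2 t3]]; split; [|split].
- move=> q; rewrite ffunE; exact: t1.
- move=> q hq; rewrite ffunE; apply: t2; right; exact: s2.
- move=> z z0; rewrite !ffunE.
  case: (s3 z z0) => [h|[[h hQ]|[h hQ]]].
  + by left; apply: t2; right.
  + by left; apply: t2; left.
  + have := t1 (s z); have := ltn_ord (t (s z)) => h1 h2.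
    have [e|[e|e]] : val (t (s z)) = n-1 \/ val (t (s z)) = n-2 \/ inQM n (val (t (s z))) by l.
    * by left.
    * right; left; split => // q hq; rewrite ffunE (t2 _ (hQ q hq)); l.
    * right; right; split => // q hq; rewrite ffunE (t2 _ (hQ q hq)); by right.
Qed.

Lemma wt_cons n (a : W_alphabet n) w :
  word_trans (@W_delta n) (a :: w) = [ffun q => word_trans (@W_delta n) w (val a q)].
Proof. by apply/ffunP => q; rewrite !ffunE. Qed.

Lemma forward n (hn : 4 <= n) (t : {ffun 'I_n -> 'I_n}) :
  dfa_transition_semigroup (W_dfa n) t -> P t.
Proof.
move=> [w [hw <-]].
elim: w hw => // a w IH _; rewrite wt_cons.
case: w IH => [|b w] IH.
- have -> : [ffun q => word_trans (@W_delta n) [::] (val a q)] = val a.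
    by apply/ffunP => q; rewrite !ffunE.
  apply: letter_P => //; exact: (valP a).
- apply: (P_comp hn (s := val a)); first by apply: letter_P => //; exact: (valP a).
  exact: IH.
Qed.

Definition mk (m : nat) (f : nat -> nat) : {ffun 'I_m.+1 -> 'I_m.+1} :=
  [ffun q => inord (minn (f (val q)) m)].

Lemma mkE m f (q : 'I_m.+1) : val (mk m f q) = minn (f (val q)) m.
Proof. by rewrite ffunE; apply: inordK; rewrite ltnS geq_minr. Qed.

Lemma inordV m k : k < m.+1 -> val (@inord m k) = k.
Proof. exact: inordK. Qed.

Definition bl m i := mk m (fun k => if k == 0 then m else if k == i then m-1
                             else if k == m-1 then m else k).
Definition cid m := mk m (fun k => if k == 0 then m-1 else if (1 <= k <= m-2) then k else m).
Definition dl m p := mk m (fun k => if k == 0 then p else if k == 1 then m-1 else m).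
Definition cf m (g : nat -> nat) :=
  mk m (fun k => if k == 0 then m-1 else if (1 <= k <= m-2) then g k else m).

Ltac fa := apply/forallP => q; rewrite ?mkE; have := ltn_ord q; ifs; l.

Lemma bl_ok m (hm : 3 <= m) i (hi : 1 <= i <= m-2) : W_letter (bl m i).
Proof.
apply/or3P; apply: Or31; apply/existsP; exists (inord i).
rewrite inordV; last l.
apply/andP; split; first l.
by apply/forallP => q; rewrite mkE; have := ltn_ord q; ifs; l.
Qed.

Lemma cf_ok m (hm : 3 <= m) g
  (hg : forall k, 1 <= k <= m-2 -> g k != 0 /\ g k != m-1 /\ g k <= m)
  k0 (hk0 : 1 <= k0 <= m-2) (hk : g k0 < m) : W_letter (cf m g).
Proof.
apply/or3P; apply: Or32.
apply/andP; split; [apply/andP; split; [apply/andP; split|]|].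
- apply/forallP => q; rewrite mkE; apply/implyP; have := ltn_ord q; ifs; l.
- apply/forallP => q; rewrite mkE; apply/implyP; have := ltn_ord q; ifs; l.
- apply/forallP => q; rewrite mkE; apply/implyP; have := ltn_ord q.
  have := hg (val q). ifs; l.
- apply/negP => /forallP H; have := eqP (H (inord k0)); rewrite mkE inordV; last l.
  ifs; l.
Qed.

Lemma cid_ok m (hm : 3 <= m) : W_letter (cid m).
Proof.
have -> : cid m = cf m id by [].
apply: (@cf_ok m hm id _ 1); l.
Qed.

Lemma dl_ok m (hm : 3 <= m) p (hp : 1 <= p <= m-2) : W_letter (dl m p).
Proof.
apply/or3P; apply: Or33.
apply/andP; split; [apply/andP; split; [apply/andP; split|]|].
- apply/forallP => q; rewrite mkE; apply/implyP; have := ltn_ord q; ifs; l.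
- apply/forallP => q; rewrite mkE; apply/implyP; have := ltn_ord q; ifs; l.
- apply/forallP => q; rewrite mkE; apply/implyP; have := ltn_ord q; ifs; l.
- apply/negP => /existsP [p' /andP [hp' /forallP H]].
  have := eqP (H (inord 1)); rewrite mkE inordV; last l.
  ifs; l.
Qed.

Lemma inordvv m (q : 'I_m.+1) : inord (val q) = q.
Proof. exact: inord_val. Qed.

Lemma free_i m (hm : 3 <= m) (t : {ffun 'I_m.+1 -> 'I_m.+1}) (q0 : 'I_m.+1)
  (hq0 : inQM m.+1 (val q0)) (e0 : val (t q0) = m-1) :
  exists i, 1 <= i <= m-2 /\ forall q : 'I_m.+1, inQM m.+1 (val q) -> val (t q) <> i.
Proof.
case: (boolP [exists i : 'I_m.+1, inQM m.+1 (val i) &&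
          [forall q : 'I_m.+1, inQM m.+1 (val q) ==> (val (t q) != val i)]]).
  case/existsP => i /andP [hi /forallP H]; exists (val i); split; first l.
  move=> q hq; have := H q; rewrite hq /= => /eqP; done.
move=> hN; exfalso.
pose A := [set q : 'I_m.+1 | inQM m.+1 (val q)].
have hsub : (inord (m-1) |: A) \subset [set t x | x in A].
  apply/subsetP => x; rewrite in_setU1 => /orP [/eqP ->|hx].
    have -> : (inord (m-1) : 'I_m.+1) = t q0 by apply: val_inj; rewrite /= e0 inordV; l.
    by apply: imset_f; rewrite inE.
  have : ~~ (inQM m.+1 (val x) && [forall q : 'I_m.+1, inQM m.+1 (val q) ==> (val (t q) != val x)]).
    by move: hN; rewrite negb_exists => /forallP.
  rewrite inE in hx; rewrite hx /= negb_forall => /existsP [q].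
  rewrite negb_imply negbK => /andP [hq /eqP e].
  have -> : x = t q by apply: val_inj.
  by apply: imset_f; rewrite inE.
have := subset_leq_card hsub.
rewrite cardsU1 inE inordV; last l.
have -> : inQM m.+1 (m-1) = false by rewrite /inQM; l.
move=> h2; have := leq_trans h2 (leq_imset_card t A); by rewrite /= add1n ltnn.
Qed.

Lemma wt1 n (a : W_alphabet n) : word_trans (@W_delta n) [:: a] = val a.
Proof. by apply/ffunP => q; rewrite !ffunE. Qed.
Lemma wt2 n (a b : W_alphabet n) :
  word_trans (@W_delta n) [:: a; b] = [ffun q => val b (val a q)].
Proof. by apply/ffunP => q; rewrite !ffunE. Qed.
Lemma wt3 n (a b c : W_alphabet n) :
  word_trans (@W_delta n) [:: a; b; c] = [ffun q => val c (val b (val a q))].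
Proof. by apply/ffunP => q; rewrite !ffunE. Qed.

Lemma nex m (A B : 'I_m.+1 -> bool) : ~~ [exists q, A q && B q] -> forall q, A q -> ~~ B q.
Proof. move=> /existsPn H q hq; move: (H q); by rewrite hq. Qed.

Ltac qsplit m q := have hqq := ltn_ord q;
  have [eq|[eq|eq]] : val q = 0 \/ inQM m.+1 (val q) \/ (val q = m.+1 - 2 \/ val q = m.+1 - 1) by l.

Lemma backward m (hm : 3 <= m) (t : {ffun 'I_m.+1 -> 'I_m.+1}) :
  P t -> dfa_transition_semigroup (W_dfa m.+1) t.
Proof.
move=> [t1 [t2 t3]].
have h0 q : val q = 0 -> t q = t ord0 by move=> e; congr (t _); apply: val_inj.
case: (t3 ord0 erefl) => [e|[[e hQ]|[e hQ]]].
- case: (boolP [exists q : 'I_m.+1, inQM m.+1 (val q) && (val (t q) == m-1)]).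
  + case/existsP => q0 /andP [hq0 /eqP e0].
    have [i [hi hfree]] := free_i hm hq0 e0.
    pose g k := if val (t (inord k)) == m-1 then i else val (t (inord k)).
    have hc : W_letter (cf m g).
      apply: (@cf_ok m hm g _ (val q0)).
      * move=> k hk; rewrite /g; have := t1 (inord k); have := ltn_ord (t (inord k)); ifs; l.
      * l.
      * rewrite /g inordvv e0 eqxx; l.
    exists [:: @exist _ _ (cf m g) hc; @exist _ _ (bl m i) (bl_ok hm hi)]; split => //.
    rewrite wt2; apply/ffunP => q; rewrite ffunE /=; apply: val_inj.
    rewrite /bl /cf /= !mkE /g inordvv.
    qsplit m q.
    * rewrite (h0 q eq) e; ifs; l.
    * have := hfree q eq; have := t1 q; have := ltn_ord (t q); ifs; l.
    * have := t2 q eq; ifs; l.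
  + move=> hN; have hQ' := nex hN.
    case: (boolP [exists q : 'I_m.+1, inQM m.+1 (val q) && (val (t q) < m)]).
    * case/existsP => q1 /andP [hq1 lt1].
      pose g k := val (t (inord k)).
      have hc : W_letter (cf m g).
        apply: (@cf_ok m hm g _ (val q1)).
        - move=> k hk; rewrite /g; have := t1 (inord k); have := ltn_ord (t (inord k)).
          have := hQ' (inord k); rewrite inordV; last l.
          move=> /(_ ltac:(l)) /eqP; l.
        - l.
        - by rewrite /g inordvv.
      exists [:: @exist _ _ (cf m g) hc; @exist _ _ (cid m) (cid_ok hm)]; split => //.
      rewrite wt2; apply/ffunP => q; rewrite ffunE /=; apply: val_inj.
      rewrite /cid /cf /= !mkE /g inordvv.
      qsplit m q.
      - rewrite (h0 q eq) e; ifs; l.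
      - have := hQ' q eq; have := t1 q; have := ltn_ord (t q); ifs; l.
      - have := t2 q eq; ifs; l.
    * move=> hN2; have hQ2 := nex hN2.
      have h1 : 1 <= 1 <= m-2 by l.
      exists [:: @exist _ _ (dl m 1) (dl_ok hm h1); @exist _ _ (dl m 1) (dl_ok hm h1);
                 @exist _ _ (dl m 1) (dl_ok hm h1)]; split => //.
      rewrite wt3; apply/ffunP => q; rewrite ffunE /=; apply: val_inj.
      rewrite /dl /= !mkE.
      qsplit m q.
      - rewrite (h0 q eq) e; ifs; l.
      - have := hQ2 q eq; have := ltn_ord (t q); ifs; l.
      - have := t2 q eq; ifs; l.
- case: (boolP [exists q : 'I_m.+1, inQM m.+1 (val q) && (val (t q) < m)]).
  + case/existsP => q1 /andP [hq1 lt1].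
    have hc : W_letter t.
      apply/or3P; apply: Or32.
      apply/andP; split; [apply/andP; split; [apply/andP; split|]|].
      * apply/forallP => q; apply/implyP => /eqP eq; rewrite (h0 q eq) e; l.
      * apply/forallP => q; apply/implyP => hq; rewrite t2; [l|l].
      * apply/forallP => q; apply/implyP => hq; have := hQ q hq; have := t1 q; l.
      * apply/negP => /forallP H; have := eqP (H q1); rewrite hq1; ifs; l.
    exists [:: @exist _ _ t hc]; split => //; by rewrite wt1.
  + move=> hN2; have hQ2 := nex hN2.
    have h1 : 1 <= 1 <= m-2 by l.
    exists [:: @exist _ _ (dl m 1) (dl_ok hm h1); @exist _ _ (bl m 1) (bl_ok hm h1)]; split => //.
    rewrite wt2; apply/ffunP => q; rewrite ffunE /=; apply: val_inj.
    rewrite /dl /bl /= !mkE.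
    qsplit m q.
    * rewrite (h0 q eq) e; ifs; l.
    * have := hQ2 q eq; have := ltn_ord (t q); ifs; l.
    * have := t2 q eq; ifs; l.
- case: (boolP [exists q : 'I_m.+1, inQM m.+1 (val q) && (val (t q) == m-1)]).
  + case/existsP => q1 /andP [hq1 /eqP e1].
    have hc : W_letter t.
      apply/or3P; apply: Or33.
      apply/andP; split; [apply/andP; split; [apply/andP; split|]|].
      * apply/forallP => q; apply/implyP => /eqP eq; rewrite (h0 q eq); l.
      * apply/forallP => q; apply/implyP => hq; have := hQ q hq; l.
      * apply/forallP => q; apply/implyP => hq; rewrite t2; [l|l].
      * apply/negP => /existsP [p /andP [hp /forallP H]]; have := eqP (H q1); rewrite hq1; ifs; l.
    exists [:: @exist _ _ t hc]; split => //; by rewrite wt1.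
  + move=> hN2; have hQ2 := nex hN2.
    have hp : 1 <= val (t ord0) <= m-2 by l.
    exists [:: @exist _ _ (dl m (val (t ord0))) (dl_ok hm hp); @exist _ _ (cid m) (cid_ok hm)];
      split => //.
    rewrite wt2; apply/ffunP => q; rewrite ffunE /=; apply: val_inj.
    rewrite /dl /cid /= !mkE.
    qsplit m q.
    * rewrite (h0 q eq); ifs; l.
    * have := hQ2 q eq; have := hQ q eq; ifs; l.
    * have := t2 q eq; ifs; l.
Qed.

Theorem mainTheorem7 (n : nat) (hn : 4 <= n) (t : {ffun 'I_n -> 'I_n}) :
  dfa_transition_semigroup (W_dfa n) t <-> W_bf6 t.
Proof.
split; first by move/(forward hn)/(P_W hn).
move/(P_W hn) => Pt.
case: n hn t Pt => [//|m] hn t Pt; apply: backward => //.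
Qed.
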